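(* The non-orientable genus of $K_6^3$ is $6$, i.e. $\widetilde{\mathsf{g}}(K_6^3)=6$.
   Context: $K_6^3$ is the complete $3$-uniform hypergraph on $\{1,\dots,6\}$ (edges: all $20$ triples). Its non-orientable genus is the non-orientable genus of its Levi graph, the bipartite graph with vertex set $[6]\sqcup\binom{[6]}{3}$ in which $i$ is adjacent to a triple $t$ iff $i\in t$. The non-orientable genus of a graph is the minimum $c$ such that it embeds in the non-orientable surface with $c$ crosscaps. *)

(* Defs.v *)
From HB Require Import structures.
From mathcomp Require Import all_boot all_order all_algebra all_fingroup.
Set Implicit Arguments. Unset Strict Implicit. Unset Printing Implicit Defensive.
Import GRing.Theory Num.Theory.

Section Embedding.
Variables (V : finType) (adj : rel V).
Hypothesis adj_sym : symmetric adj.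

Definition dart := {p : V * V | adj p.1 p.2}.

Definition dart_rev (d : dart) : dart :=
  @exist _ (fun p : V * V => adj p.1 p.2) ((val d).2, (val d).1)
    (etrans (esym (adj_sym (val d).1 (val d).2)) (valP d)).

Definition num_vertices : nat := #|V|.
Definition num_edges : nat :=
  #|[set [set p.1; p.2] | p in [set p : V * V | adj p.1 p.2]]|.

(* A general (signed) rotation system, a.k.a. embedding scheme:
   rho is the local rotation (a permutation of darts fixing the tail and
   cyclically permuting the darts at each vertex), lambda the edge signature. *)
Definition scheme_ok (rho : {perm dart}) (lambda : dart -> bool) : Prop :=
  [/\ forall d, (val (rho d)).1 = (val d).1,
      forall d d', (val d).1 = (val d').1 -> fconnect rho d d' &
      forall d, lambda (dart_rev d) = lambda d].

(* flags: (d, true) = corner at the tail of d between d and rho d,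
          (d, false) = corner between rho^-1 d and d. *)
Definition flag := (dart * bool)%type.

Definition t_vert (lambda : dart -> bool) (x : flag) : flag :=
  (dart_rev x.1, if lambda x.1 then x.2 else ~~ x.2).
Definition t_edge (rho : {perm dart}) (x : flag) : flag :=
  if x.2 then (rho x.1, false) else ((rho^-1)%g x.1, true).
Definition t_face (x : flag) : flag := (x.1, ~~ x.2).

(* faces = orbits of the group generated by t_vert and t_edge *)
Definition num_faces (rho : {perm dart}) (lambda : dart -> bool) : nat :=
  n_comp (fun x y : flag => (y == t_vert lambda x) || (y == t_edge rho x))
         predT.

Definition euler_genus (rho : {perm dart}) (lambda : dart -> bool) : int :=
  (2 - (num_vertices)%:Z + (num_edges)%:Z - (num_faces rho lambda)%:Z)%R.

Definition scheme_orientable (rho : {perm dart}) (lambda : dart -> bool) : Prop :=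
  exists col : flag -> bool, forall x : flag,
    [/\ col (t_vert lambda x) = ~~ col x,
        col (t_edge rho x) = ~~ col x &
        col (t_face x) = ~~ col x].

(* G embeds in the non-orientable surface N_c with c crosscaps iff it has a
   cellular embedding in a non-orientable surface of Euler genus <= c, or in
   an orientable surface of Euler genus < c. *)
Definition embeds_in_N (c : nat) : Prop :=
  exists (rho : {perm dart}) (lambda : dart -> bool),
    scheme_ok rho lambda /\
    ((scheme_orientable rho lambda /\ (euler_genus rho lambda < c%:Z)%R) \/
     (~ scheme_orientable rho lambda /\ (euler_genus rho lambda <= c%:Z)%R)).

Definition is_nonorientable_genus (g : nat) : Prop :=
  embeds_in_N g /\ forall c, (c < g)%N -> ~ embeds_in_N c.

End Embedding.

Definition triple := {t : {set 'I_6} | #|t| == 3}.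
Definition levi_vertex := ('I_6 + triple)%type.

Definition levi_adj : rel levi_vertex := fun x y =>
  match x, y with
  | inl i, inr t => i \in val t
  | inr t, inl i => i \in val t
  | _, _ => false
  end.

Lemma levi_adj_sym : symmetric levi_adj.
Proof. by case=> [i|t] [j|u]. Qed.

(* Main.v *)
Require Import Defs.
From mathcomp Require Import all_boot all_order all_algebra all_fingroup.
From mathcomp Require Import zify.
Set Implicit Arguments. Unset Strict Implicit. Unset Printing Implicit Defensive.

Definition bitn (m i : nat) : bool := odd (m %/ 2 ^ i).
Definition bitset (m : nat) : {set 'I_6} := [set i : 'I_6 | bitn m i].
Definition popc (m : nat) : nat :=
  bitn m 0 + bitn m 1 + bitn m 2 + bitn m 3 + bitn m 4 + bitn m 5.
Definition mem6 (t : {set 'I_6}) (k : nat) : bool := (inord k : 'I_6) \in t.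
Definition mask (t : {set 'I_6}) : nat :=
  mem6 t 0 + 2 * mem6 t 1 + 4 * mem6 t 2 + 8 * mem6 t 3 + 16 * mem6 t 4 + 32 * mem6 t 5.

Lemma ord6_cases (i : 'I_6) : i = inord 0 \/ i = inord 1 \/ i = inord 2 \/ i = inord 3 \/ i = inord 4 \/ i = inord 5.
Proof.
have -> : i = inord (val i) by rewrite inord_val.
case: i => [[|[|[|[|[|[|k]]]]]] Hk] /=.
- by left.
- by right; left.
- by right; right; left.
- by right; right; right; left.
- by right; right; right; right; left.
- by right; right; right; right; right.
- by [].
Qed.

Lemma bit_mask t (i : 'I_6) : bitn (mask t) i = (i \in t).
Proof.
rewrite /mask /mem6.
have E : forall k, k < 6 -> i = inord k -> (i \in t) = mem6 t k.
  by move=> k _ ->.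
case: (ord6_cases i) => [->|[->|[->|[->|[->|->]]]]]; rewrite ?inordK //;
move: (inord 0 \in t) (inord 1 \in t) (inord 2 \in t) (inord 3 \in t) (inord 4 \in t) (inord 5 \in t);
by do 6!case.
Qed.

Lemma card6 (t : {set 'I_6}) : #|t| = \sum_(i < 6) (i \in t).
Proof.
rewrite -sum1_card big_mkcond /=; apply: eq_bigr => i _; by case: (i \in t).
Qed.

Lemma sum6 (f : 'I_6 -> nat) : \sum_(i < 6) f i = f (inord 0) + f (inord 1) + f (inord 2) + f (inord 3) + f (inord 4) + f (inord 5).
Proof.
rewrite !big_ord_recr big_ord0 /= add0n.
by congr (_ + _ + _ + _ + _ + _); congr f; apply: val_inj; rewrite /= inordK.
Qed.

Lemma card_bitset m : #|bitset m| = popc m.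
Proof.
rewrite card6 sum6 /bitset !inE /popc !inordK //.
Qed.

Lemma popc_mask t : popc (mask t) = #|t|.
Proof.
rewrite card6 sum6 -!bit_mask /popc.
by congr (_ + _ + _ + _ + _ + _); rewrite inordK.
Qed.

Lemma mask_lt t : mask t < 64.
Proof.
rewrite /mask; move: (mem6 t 0) (mem6 t 1) (mem6 t 2) (mem6 t 3) (mem6 t 4) (mem6 t 5);
by do 6!case.
Qed.

Lemma mask_inj : injective mask.
Proof.
move=> t t' E; apply/setP => i; by rewrite -!bit_mask E.
Qed.

Definition recon (m : nat) : nat :=
  bitn m 0 + 2 * bitn m 1 + 4 * bitn m 2 + 8 * bitn m 3 + 16 * bitn m 4 + 32 * bitn m 5.

Lemma recon_ok : all (fun m => recon m == m) (iota 0 64).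
Proof. by vm_compute. Qed.

Lemma mask_bitset m : m < 64 -> mask (bitset m) = m.
Proof.
move=> Hm; have /allP /(_ m) := recon_ok.
rewrite mem_iota /= => /(_ Hm) /eqP H.
by rewrite -[RHS]H /mask /mem6 /bitset /recon !inE !inordK.
Qed.

Definition code (v : levi_vertex) : nat :=
  match v with inl i => val i | inr t => 6 + mask (val t) end.

Definition cadj (c1 c2 : nat) : bool :=
  if c1 < 6 then (if 6 <= c2 then bitn (c2 - 6) c1 else false)
  else if c2 < 6 then (if 6 <= c1 then bitn (c1 - 6) c2 else false) else false.

Lemma adj_code u v : levi_adj u v = cadj (code u) (code v).
Proof.
case: u => [i|t]; case: v => [j|t']; rewrite /cadj /code /levi_adj.
- by rewrite (leqNgt 6 j) !ltn_ord.
- by rewrite ltn_ord leq_addr addKn bit_mask.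
- by rewrite (ltnNge (6 + _) 6) leq_addr ltn_ord addKn bit_mask.
- by rewrite !(ltnNge (6 + _) 6) !leq_addr.
Qed.

Definition codes : seq nat :=
  iota 0 6 ++ [seq 6 + m | m <- iota 0 64 & popc m == 3].

Lemma code_in v : code v \in codes.
Proof.
case: v => [i|t]; rewrite mem_cat; apply/orP.
  by left; rewrite mem_iota add0n ltn_ord.
right; apply/mapP; exists (mask (val t)) => //.
rewrite mem_filter mem_iota add0n mask_lt popc_mask (eqP (valP t)).
by [].
Qed.

Lemma code_inj : injective code.
Proof.
case=> [i|t] [j|t'] /=.
- by move=> E; congr inl; apply: val_inj.
- by move=> E; have := ltn_ord i; rewrite E ltnNge leq_addr.
- by move=> E; have := ltn_ord j; rewrite -E ltnNge leq_addr.
- by move=> /addnI /mask_inj E; congr inr; apply: val_inj.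
Qed.

Lemma t0_ok : #|bitset 7| == 3.
Proof. by rewrite card_bitset. Qed.
Definition t0 : triple := exist _ (bitset 7) t0_ok.

Definition mktr (m : nat) : triple :=
  if insub (bitset m) is Some t then t else t0.

Definition dec (c : nat) : levi_vertex :=
  if c < 6 then inl (inord c) else inr (mktr (c - 6)).

Lemma code_dec c : c \in codes -> code (dec c) = c.
Proof.
rewrite mem_cat mem_iota add0n => /orP [Hc|].
  have Hc' : c < 6 by [].
  by rewrite /dec Hc'; exact: inordK.
case/mapP=> m; rewrite mem_filter mem_iota add0n => /andP [/eqP Hp Hm] ->.
rewrite /dec ltnNge leq_addr addKn /mktr.
case: insubP => [t _ Ht|].
  by change (6 + mask (val t) = 6 + m); rewrite Ht mask_bitset.
by rewrite card_bitset Hp.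
Qed.

Notation D := (dart levi_adj).

Definition cd (d : D) : nat * nat := (code (val d).1, code (val d).2).

Definition CL : seq (nat * nat) :=
  [seq p <- [seq (x, y) | x <- codes, y <- codes] | cadj p.1 p.2].

Lemma CL_inv p : p \in CL -> [/\ p.1 \in codes, p.2 \in codes & cadj p.1 p.2].
Proof.
rewrite mem_filter => /andP [Ha /allpairsP [[x y] [Hx Hy E]]].
by move: Ha; rewrite E => Ha; split.
Qed.

Lemma cd_in d : cd d \in CL.
Proof.
rewrite mem_filter; apply/andP; split.
  by rewrite /cd -adj_code (valP d).
by apply/allpairsP; exists (code (val d).1, code (val d).2); rewrite !code_in.
Qed.

Lemma cd_inj : injective cd.
Proof.
move=> [[a b] Hab] [[a' b'] Hab'] [/code_inj E1 /code_inj E2]; apply: val_inj.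
by rewrite /= E1 E2.
Qed.

Lemma d0_ok : levi_adj (inl ord0) (inr t0).
Proof. by rewrite /levi_adj /t0 inE. Qed.
Definition d0 : D := exist _ (inl ord0, inr t0) d0_ok.

Definition decd (p : nat * nat) : D :=
  if insub (dec p.1, dec p.2) is Some d then d else d0.

Lemma cd_decd p : p \in CL -> cd (decd p) = p.
Proof.
case/CL_inv => H1 H2 H3; rewrite /decd.
case: insubP => [d _ Hd|].
  by rewrite /cd Hd /= !code_dec // -surjective_pairing.
by move=> /negP []; rewrite adj_code !code_dec.
Qed.

Lemma card_codeP (T : finType) (X : eqType) (A : {pred T}) (f : T -> X) (L : seq X) :
  injective f -> uniq L -> (forall x, x \in A -> f x \in L) ->
  (forall y, y \in L -> exists2 x, x \in A & f x = y) -> #|A| = size L.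
Proof.
move=> finj uL H1 H2; rewrite cardE -(size_map f); apply/perm_size/uniq_perm.
- by rewrite map_inj_uniq // enum_uniq.
- by [].
move=> y; apply/mapP/idP => [[x]|/H2 [x Hx <-]].
  by rewrite mem_enum => /H1 Hx ->.
by exists x; rewrite ?mem_enum.
Qed.
Definition NXT : seq (nat*nat*nat) := [:: (0,13,41); (0,17,19); (0,19,13); (0,25,17); (0,27,31); (0,31,47); (0,41,43); (0,43,27); (0,47,55); (0,55,25); (1,13,41); (1,17,25); (1,20,17); (1,25,32); (1,28,20); (1,32,48); (1,41,56); (1,44,13); (1,48,44); (1,56,28); (2,13,19); (2,19,50); (2,20,28); (2,27,34); (2,28,58); (2,34,20); (2,43,27); (2,44,13); (2,50,43); (2,58,44); (3,17,19); (3,19,50); (3,20,17); (3,31,32); (3,32,48); (3,34,20); (3,47,31); (3,48,62); (3,50,47); (3,62,34); (4,25,55); (4,27,31); (4,28,56); (4,31,32); (4,32,25); (4,34,27); (4,55,58); (4,56,62); (4,58,28); (4,62,34); (5,41,43); (5,43,50); (5,44,48); (5,47,55); (5,48,62); (5,50,47); (5,55,58); (5,56,41); (5,58,44); (5,62,56); (13,0,1); (13,1,2); (13,2,0); (17,0,1); (17,1,3); (17,3,0); (19,0,2); (19,2,3); (19,3,0); (20,1,2); (20,2,3); (20,3,1); (25,0,1); (25,1,4); (25,4,0); (27,0,2); (27,2,4); (27,4,0); (28,1,2); (28,2,4); (28,4,1); (31,0,3); (31,3,4); (31,4,0); (32,1,3); (32,3,4); (32,4,1); (34,2,3); (34,3,4);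 (34,4,2); (41,0,1); (41,1,5); (41,5,0); (43,0,2); (43,2,5); (43,5,0); (44,1,2); (44,2,5); (44,5,1); (47,0,3); (47,3,5); (47,5,0); (48,1,3); (48,3,5); (48,5,1); (50,2,3); (50,3,5); (50,5,2); (55,0,4); (55,4,5); (55,5,0); (56,1,4); (56,4,5); (56,5,1); (58,2,4); (58,4,5); (58,5,2); (62,3,4); (62,4,5); (62,5,3)].
Definition LAM : seq (nat*nat) := [:: (0,13); (0,19); (0,25); (0,31); (0,43); (0,55); (1,25); (1,28); (1,32); (1,41); (1,44); (1,56); (2,13); (2,19); (2,27); (2,28); (2,34); (3,17); (3,20); (3,31); (3,48); (3,50); (3,62); (4,25); (4,27); (4,28); (4,32); (4,34); (4,55); (4,56); (5,41); (5,44); (5,47); (5,56); (5,58); (13,0); (13,2); (17,3); (19,0); (19,2); (20,3); (25,0); (25,1); (25,4); (27,2); (27,4); (28,1); (28,2); (28,4); (31,0); (31,3); (32,1); (32,4); (34,2); (34,4); (41,1); (41,5); (43,0); (44,1); (44,5); (47,5); (48,3); (50,3); (55,0); (55,4); (56,1); (56,4); (56,5); (58,5); (62,3)].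
Definition LABT : seq (nat*nat*nat) := [:: (0,13,0); (0,17,4); (0,19,2); (0,25,1); (0,27,7); (0,31,5); (0,41,8); (0,43,3); (0,47,9); (0,55,6); (1,13,0); (1,17,1); (1,20,12); (1,25,14); (1,28,11); (1,32,13); (1,41,16); (1,44,10); (1,48,17); (1,56,15); (2,13,2); (2,19,18); (2,20,11); (2,27,20); (2,28,21); (2,34,19); (2,43,3); (2,44,10); (2,50,22); (2,58,23); (3,17,4); (3,19,18); (3,20,12); (3,31,24); (3,32,13); (3,34,19); (3,47,5); (3,48,27); (3,50,26); (3,62,25); (4,25,6); (4,27,7); (4,28,15); (4,31,24); (4,32,14); (4,34,20); (4,55,28); (4,56,29); (4,58,21); (4,62,25); (5,41,8); (5,43,22); (5,44,17); (5,47,9); (5,48,27); (5,50,26); (5,55,28); (5,56,16); (5,58,23); (5,62,29); (13,0,0); (13,1,10); (13,2,2); (17,0,1); (17,1,12); (17,3,4); (19,0,2); (19,2,18); (19,3,4); (20,1,11); (20,2,19); (20,3,12); (25,0,1); (25,1,14); (25,4,6); (27,0,3); (27,2,20); (27,4,7); (28,1,11); (28,2,21); (28,4,15); (31,0,5); (31,3,24); (31,4,7); (32,1,13); (32,3,24); (32,4,14); (34,2,19); (34,3,25); (34,4,20); (41,0,0); (41,1,16); (41,5,8); (43,0,3); (43,2,22); (43,5,8); (44,1,10); (44,2,23); (44,5,17); (47,0,5); (47,3,26); (47,5,9); (48,1,13); (48,3,27); (48,5,17); (50,2,18); (50,3,26); (50,5,22); (55,0,6); (55,4,28); (55,5,9);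 (56,1,15); (56,4,29); (56,5,16); (58,2,21); (58,4,28); (58,5,23); (62,3,25); (62,4,29); (62,5,27)].
Definition LABF : seq (nat*nat*nat) := [:: (0,13,2); (0,17,1); (0,19,4); (0,25,6); (0,27,3); (0,31,7); (0,41,0); (0,43,8); (0,47,5); (0,55,9); (1,13,10); (1,17,12); (1,20,11); (1,25,1); (1,28,15); (1,32,14); (1,41,0); (1,44,17); (1,48,13); (1,56,16); (2,13,10); (2,19,2); (2,20,19); (2,27,3); (2,28,11); (2,34,20); (2,43,22); (2,44,23); (2,50,18); (2,58,21); (3,17,12); (3,19,4); (3,20,19); (3,31,5); (3,32,24); (3,34,25); (3,47,26); (3,48,13); (3,50,18); (3,62,27); (4,25,14); (4,27,20); (4,28,21); (4,31,7); (4,32,24); (4,34,25); (4,55,6); (4,56,15); (4,58,28); (4,62,29); (5,41,16); (5,43,8); (5,44,23); (5,47,26); (5,48,17); (5,50,22); (5,55,9); (5,56,29); (5,58,28); (5,62,27); (13,0,2); (13,1,0); (13,2,10); (17,0,4); (17,1,1); (17,3,12); (19,0,4); (19,2,2); (19,3,18); (20,1,12); (20,2,11); (20,3,19); (25,0,6); (25,1,1); (25,4,14); (27,0,7); (27,2,3); (27,4,20); (28,1,15); (28,2,11); (28,4,21); (31,0,7); (31,3,5); (31,4,24); (32,1,14); (32,3,13); (32,4,24); (34,2,20); (34,3,19); (34,4,25); (41,0,8); (41,1,0); (41,5,16); (43,0,8); (43,2,3); (43,5,22); (44,1,17); (44,2,10); (44,5,23); (47,0,9); (47,3,5); (47,5,26);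 (48,1,17); (48,3,13); (48,5,27); (50,2,22); (50,3,18); (50,5,26); (55,0,9); (55,4,6); (55,5,28); (56,1,16); (56,4,15); (56,5,29); (58,2,23); (58,4,21); (58,5,28); (62,3,27); (62,4,25); (62,5,29)].
Definition P0 : nat*nat := (0,13).
Definition MOVES : seq bool := [:: true; false; true; false; true; true; true; true; false; true; true; false; true; true].

Definition look (L : seq (nat * nat * nat)) (c1 c2 : nat) : nat :=
  head 0 [seq x.2 | x <- L & x.1 == (c1, c2)].
Definition nxt (c1 c2 : nat) : nat := look NXT c1 c2.

Lemma chk1 : all (fun p => (p.1, nxt p.1 p.2) \in CL) CL.
Proof. by vm_compute. Qed.
Lemma chk2 : all (fun p => all (fun q => if p.1 == q.1 then (if nxt p.1 p.2 == nxt q.1 q.2 then p == q else true) else true) CL) CL.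
Proof. by vm_compute. Qed.
Lemma chk3 : all (fun p => all (fun q => if p.1 == q.1 then has (fun n => iter n (nxt p.1) p.2 == q.2) (iota 0 10) else true) CL) CL.
Proof. by vm_compute. Qed.
Lemma sizeCL : size CL = 120.
Proof. by vm_compute. Qed.
Lemma uniqCL : uniq CL.
Proof. by vm_compute. Qed.

Opaque CL codes nxt look.
Arguments nxt : simpl never.
Arguments look : simpl never.
Arguments cadj : simpl never.
Arguments dec : simpl never.
Arguments mask : simpl never.
Arguments bitn : simpl never.

Definition rho_fun (d : D) : D :=
  if insub ((val d).1, dec (nxt (cd d).1 (cd d).2)) is Some d' then d' else d.

Lemma rho_fun_tail d : (val (rho_fun d)).1 = (val d).1.
Proof. by rewrite /rho_fun; case: insubP => [d' _ ->|]. Qed.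

Lemma cd_rho d : cd (rho_fun d) = ((cd d).1, nxt (cd d).1 (cd d).2).
Proof.
rewrite /rho_fun.
set w := nxt (cd d).1 (cd d).2.
have Hin : ((cd d).1, w) \in CL := allP chk1 _ (cd_in d).
case/CL_inv: Hin => H1 H2 H3.
have Ha : levi_adj (val d).1 (dec w) by rewrite adj_code code_dec.
case: insubP => [d' _ Hd|]; last by rewrite Ha.
by rewrite /cd Hd code_dec.
Qed.

Lemma rho_inj : injective rho_fun.
Proof.
move=> d d' E; apply: cd_inj.
move: (allP (allP chk2 _ (cd_in d)) _ (cd_in d')) (congr1 cd E); rewrite !cd_rho.
move: (cd d) (cd d') => [a b] [a' b'] /= H [E1 E2].
by move: H; rewrite E2 E1 !eqxx => /eqP.
Qed.

Definition rho : {perm D} := perm rho_inj.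

Lemma cd_iter n d : cd (iter n rho_fun d) = ((cd d).1, iter n (nxt (cd d).1) (cd d).2).
Proof.
elim: n => [|n IH]; first by case: (cd d).
by rewrite iterS cd_rho IH.
Qed.

Lemma iter_rho n d : iter n rho d = iter n rho_fun d.
Proof. elim: n => [|n IH] //=; by rewrite IH permE. Qed.

Definition lamf (p : nat * nat) : bool := p \in LAM.
Definition lambda (d : D) : bool := lamf (cd d).

Lemma chk4 : all (fun p => lamf (p.2, p.1) == lamf p) CL.
Proof. by vm_compute. Qed.

Lemma cd_rev d : cd (dart_rev levi_adj_sym d) = ((cd d).2, (cd d).1).
Proof. by []. Qed.

Lemma scheme_ok_rho : scheme_ok levi_adj_sym rho lambda.
Proof.
split.
- by move=> d; rewrite permE rho_fun_tail.
- move=> d d' E.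
  have H := allP (allP chk3 _ (cd_in d)) _ (cd_in d').
  have E' : (cd d).1 = (cd d').1 by rewrite /cd E.
  rewrite E' eqxx in H; case/hasP: H => n _ /eqP En.
  have -> : d' = iter n rho d.
    by apply: cd_inj; rewrite iter_rho cd_iter E' En; case: (cd d').
  exact: fconnect_iter.
- move=> d; rewrite /lambda cd_rev.
  by have /allP /(_ _ (cd_in d)) /eqP := chk4.
Qed.

Lemma uniq_codes : uniq codes. Proof. by vm_compute. Qed.
Lemma size_codes : size codes = 26. Proof. by vm_compute. Qed.
Definition CL1 := [seq p <- CL | p.1 < 6].
Lemma uniq_CL1 : uniq CL1. Proof. by vm_compute. Qed.
Lemma size_CL1 : size CL1 = 60. Proof. by vm_compute. Qed.
Lemma size_CL : size CL = 120. Proof. by vm_compute. Qed.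
Lemma uniq_CL : uniq CL. Proof. by vm_compute. Qed.


Lemma card_V : num_vertices levi_vertex = 26.
Proof.
rewrite /num_vertices -size_codes -(@card_codeP _ _ predT code codes).
all: try (by []).
all: first [exact: code_inj | exact: uniq_codes | by move=> x _; apply: code_in |
   by move=> y Hy; exists (dec y) => //; rewrite code_dec].
Qed.

Lemma card_D : #|{: D}| = 120.
Proof.
rewrite -size_CL -(@card_codeP _ _ predT cd CL).
all: try (by []).
all: first [exact: cd_inj | exact: uniq_CL | by move=> x _; apply: cd_in |
   by move=> y Hy; exists (decd y) => //; rewrite cd_decd].
Qed.

Lemma cadj_lt a b : cadj a b -> a < 6 -> 6 <= b.
Proof. by rewrite /cadj; case: ifP => // _; case: ifP. Qed.
Lemma cadj_ge a b : cadj a b -> 6 <= a -> b < 6.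
Proof.
rewrite /cadj; case: ifP => [Ha _ Ha'|_]; first by move: Ha'; rewrite leqNgt Ha.
by case: ifP => [Hb _ _|].
Qed.

Lemma code_inl_lt (u v : levi_vertex) : levi_adj u v -> code u < 6 -> 6 <= code v.
Proof. rewrite adj_code; exact: cadj_lt. Qed.
Lemma code_inr_lt (u v : levi_vertex) : levi_adj u v -> ~~ (code u < 6) -> code v < 6.
Proof. rewrite adj_code -leqNgt; exact: cadj_ge. Qed.


Definition A1 := [set p : levi_vertex * levi_vertex | levi_adj p.1 p.2 && (code p.1 < 6)].

Lemma card_A1 : #|A1| = 60.
Proof.
rewrite -size_CL1 -(@card_codeP _ _ (mem A1) (fun p => (code p.1, code p.2)) CL1).
- by [].
- by move=> [a b] [a' b'] [/code_inj -> /code_inj ->].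
- exact: uniq_CL1.
- move=> [a b]; rewrite inE => /andP [Hab Ha].
  rewrite mem_filter Ha /=.
  have -> : (code a, code b) = cd (exist _ (a, b) Hab) by [].
  exact: cd_in.
- move=> y; rewrite mem_filter => /andP [Hy1 Hy].
  case/CL_inv: Hy => H1 H2 H3.
  exists (dec y.1, dec y.2); last by rewrite !code_dec // -surjective_pairing.
  by rewrite inE /= adj_code !code_dec // H3 Hy1.
Qed.

Lemma card_E : num_edges levi_adj = 60.
Proof.
rewrite /num_edges -card_A1.
set s := fun p : levi_vertex * levi_vertex => [set p.1; p.2].
have -> : [set s p | p in [set p : levi_vertex * levi_vertex | levi_adj p.1 p.2]] = [set s p | p in A1].
  apply/setP => E; apply/imsetP/imsetP => [[p]|[p]].
    rewrite inE => Hp ->.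
    case H6: (code p.1 < 6).
      by exists p => //; rewrite inE Hp H6.
    exists (p.2, p.1); first by rewrite inE /= levi_adj_sym Hp (code_inr_lt Hp) ?H6.
    by rewrite /s /= setUC.
  by rewrite inE => /andP [Hp _] ->; exists p; rewrite ?inE.
apply: card_in_imset.
move=> [a b] [a' b']; rewrite !inE /= => /andP [Hab Ha] /andP [Hab' Ha'] E.
have Hb : 6 <= code b := code_inl_lt Hab Ha.
have Hb' : 6 <= code b' := code_inl_lt Hab' Ha'.
have : a \in s (a', b') by rewrite -E /s !inE eqxx.
rewrite /s !inE /= => /orP [/eqP Ea|/eqP Ea]; last first.
  by move: Hb'; rewrite -Ea leqNgt Ha.
have : b \in s (a', b') by rewrite -E /s !inE eqxx orbT.
rewrite /s !inE /= => /orP [/eqP Eb|/eqP Eb].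
  by move: Hb; rewrite Eb -Ea leqNgt Ha.
by rewrite Ea Eb.
Qed.

Lemma card_flag : #|{: flag levi_adj}| = 240.
Proof. by rewrite /flag card_prod card_D card_bool. Qed.

Lemma chk_nofix : all (fun p => nxt p.1 p.2 != p.2) CL.
Proof. by vm_compute. Qed.

Lemma rho_fun_neq d : rho_fun d != d.
Proof.
apply/eqP => E.
have H : nxt (cd d).1 (cd d).2 != (cd d).2 := allP chk_nofix _ (cd_in d).
have Ecd := cd_rho d; rewrite E in Ecd.
move: (cd d) Ecd H => [c1 c2] /= [E2].
by rewrite -E2 eqxx.
Qed.

Lemma rev_rev d : dart_rev levi_adj_sym (dart_rev levi_adj_sym d) = d.
Proof. by apply: val_inj; case: d => [[u v] ?]. Qed.

Lemma fconnect_fix (T : finType) (f : T -> T) x y : f x = x -> fconnect f x y -> y = x.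
Proof.
move=> fx /connectP [p Hp ->]; elim: p Hp => //= z p IH /andP [/eqP Ez Hp].
by rewrite -Ez fx in Hp *; apply: IH.
Qed.

Lemma ncomp_set (T : finType) (e : rel T) : n_comp e predT = #|[set r | roots e r]|.
Proof. by rewrite /n_comp_mem cardsE; apply: eq_card => x; rewrite !inE andbT. Qed.

Section Lower.
Variables (rho0 : {perm D}) (lam0 : D -> bool).
Hypothesis Hok : scheme_ok levi_adj_sym rho0 lam0.

Let a := t_vert levi_adj_sym lam0.
Let b := t_edge rho0.

Lemma tail_rho d : (val (rho0 d)).1 = (val d).1.
Proof. by case: Hok => H _ _; apply: H. Qed.
Lemma tail_rhoV d : (val ((rho0^-1)%g d)).1 = (val d).1.
Proof. by rewrite -{2}(permKV rho0 d) tail_rho. Qed.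

Lemma lam_rev d : lam0 (dart_rev levi_adj_sym d) = lam0 d.
Proof. by case: Hok => _ _ H; apply: H. Qed.

Lemma aa x : a (a x) = x.
Proof.
case: x => d be; rewrite /a /t_vert /= rev_rev lam_rev.
by case: (lam0 d); rewrite ?negbK.
Qed.

Lemma bb x : b (b x) = x.
Proof. by case: x => d [] ; rewrite /b /t_edge /= ?permK ?permKV. Qed.

Lemma rho0_nofix d : rho0 d != d.
Proof.
apply/eqP => E.
have := rho_fun_neq d; rewrite (@fconnect_fix _ rho0 d (rho_fun d)) ?eqxx //.
by case: Hok => _ H _; apply: H; rewrite rho_fun_tail.
Qed.

Definition sd (x : flag levi_adj) : bool := code (val x.1).1 < 6.

Lemma sd_a x : sd (a x) = ~~ sd x.
Proof.
case: x => [[[u v] H] be]; rewrite /sd /a /t_vert /=.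
case Hu: (code u < 6).
  by have := code_inl_lt H Hu; rewrite leqNgt => /negbTE ->.
by rewrite (code_inr_lt H) ?Hu.
Qed.

Lemma sd_b x : sd (b x) = sd x.
Proof. by case: x => d [] ; rewrite /sd /b /t_edge /= ?tail_rho ?tail_rhoV. Qed.

Lemma fa x : a x != x.
Proof. by apply/negP => /eqP /(congr1 sd); rewrite sd_a; case: (sd x). Qed.
Lemma fb x : b x != x.
Proof. by case: x => d []; rewrite /b /t_edge /= xpair_eqE andbF. Qed.

Lemma key (e d z : D) : dart_rev levi_adj_sym e = z -> (val z).1 = (val d).2 ->
  (val e).1 = (val d).1 -> e = d.
Proof.
move=> <-; case: e => [[u v] H]; case: d => [[u' v'] H'] /= E1 E2.
by apply: val_inj; rewrite /= E1 E2.
Qed.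

Lemma L4 y : a (b y) != b (a y).
Proof.
apply/eqP; case: y => d be /(congr1 fst); rewrite /a /b /t_vert /t_edge /=.
case: be => /=; case: (lam0 d) => /= E1.
- have E2 := key E1 (tail_rho _) (tail_rho d).
  by have := rho0_nofix d; rewrite E2 eqxx.
- have E2 := key E1 (tail_rhoV _) (tail_rho d).
  by have := rho0_nofix d; rewrite E2 eqxx.
- have E2 := key E1 (tail_rhoV _) (tail_rhoV d).
  by have := rho0_nofix d; rewrite -{1}E2 permKV eqxx.
- have E2 := key E1 (tail_rho _) (tail_rhoV d).
  by have := rho0_nofix d; rewrite -{1}E2 permKV eqxx.
Qed.

Lemma ainj : injective a. Proof. exact: (can_inj aa). Qed.
Lemma binj : injective b. Proof. exact: (can_inj bb). Qed.

Lemma W3a y : a (b (a y)) != y.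
Proof. by apply/eqP => /(congr1 a); rewrite aa => /eqP; rewrite (negbTE (fb _)). Qed.
Lemma W4a y : a (b (a (b y))) != y.
Proof.
apply/eqP => /(congr1 a); rewrite aa => /(congr1 b); rewrite bb => /eqP.
by rewrite (negbTE (L4 _)).
Qed.
Lemma W4b y : b (a (b (a y))) != y.
Proof.
apply/eqP => /(congr1 b); rewrite bb => /(congr1 a); rewrite aa => /eqP.
by rewrite eq_sym (negbTE (L4 _)).
Qed.
Lemma W5b y : b (a (b (a (b y)))) != y.
Proof.
apply/eqP => /(congr1 b); rewrite bb => /(congr1 a); rewrite aa => /(congr1 b); rewrite bb.
move=> /eqP; by rewrite eq_sym (negbTE (fb _)).
Qed.
Lemma W7a y : a (b (a (b (a (b (a y)))))) != y.
Proof.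
apply/eqP => /(congr1 a); rewrite aa => /(congr1 b); rewrite bb => /(congr1 a); rewrite aa.
move=> /eqP; by rewrite (negbTE (fb _)).
Qed.

Fixpoint w (n : nat) (x : flag levi_adj) : flag levi_adj :=
  match n with 0 => x | n'.+1 => if odd n' then b (w n' x) else a (w n' x) end.

Lemma sd_neq x y : sd x != sd y -> x != y.
Proof. by apply: contra => /eqP ->. Qed.

Lemma w_uniq x : uniq [seq w i x | i <- iota 0 8].
Proof.
rewrite /= !inE !negb_or.
repeat (apply/andP; split).
all: try by [].
all: rewrite eq_sym.
all: try (apply: sd_neq; repeat (rewrite sd_a || rewrite sd_b); by case: (sd x)).
all: match goal with
| |- is_true (b ?y != ?y) => exact: fb y
| |- is_true (a (b (a ?y)) != ?y) => exact: W3a y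
| |- is_true (a (b (a (b ?y))) != ?y) => exact: W4a y
| |- is_true (b (a (b (a ?y))) != ?y) => exact: W4b y
| |- is_true (b (a (b (a (b ?y)))) != ?y) => exact: W5b y
| |- is_true (a (b (a (b (a (b (a ?y)))))) != ?y) => exact: W7a y
end.
Qed.

Lemma e_symm : symmetric (fun x y : flag levi_adj => (y == a x) || (y == b x)).
Proof.
move=> x y.
by apply/idP/idP => /orP [/eqP ->|/eqP ->]; rewrite ?aa ?bb eqxx ?orbT.
Qed.

Lemma faces_le : num_faces levi_adj_sym rho0 lam0 <= 30.
Proof.
rewrite /num_faces.
pose e := fun x y : flag levi_adj => (y == a x) || (y == b x).
change (n_comp e predT <= 30).
have esymm : symmetric e.
  move=> x y; rewrite /e.
  by apply/idP/idP => /orP [/eqP ->|/eqP ->]; rewrite ?aa ?bb eqxx ?orbT.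
have csym : connect_sym e := sym_connect_sym esymm.
have conn_w : forall k x, connect e x (w k x).
  elim=> [|k IH] x //=; apply: connect_trans (IH x) _; apply: connect1.
  by rewrite /e; case: (odd k); rewrite eqxx ?orbT.
have root_w : forall k r, roots e r -> fingraph.root e (w k r) = r.
  move=> k r /eqP Hr; rewrite -{2}Hr; apply/esym/(fingraph.rootP csym); exact: conn_w.
set S := [set r | roots e r].
have cardS : #|[set w (nat_of_ord p.2) p.1 | p : flag levi_adj * 'I_8 in setX S [set: 'I_8]]| = #|S| * 8.
  rewrite card_in_imset ?cardsX ?cardsT ?card_ord //.
  move=> [r k] [r' k'] /setXP [Hr _] /setXP [Hr' _] /= E.
  have Er : r = r'.
    by move: Hr Hr'; rewrite !inE => Hr Hr'; rewrite -(root_w k r Hr) E (root_w k' r' Hr').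
  subst r'; congr pair.
  have U := w_uniq r.
  have Hk : k < size [seq w i r | i <- iota 0 8] by rewrite size_map size_iota.
  have Hk' : k' < size [seq w i r | i <- iota 0 8] by rewrite size_map size_iota.
  move: (nth_uniq (w 0 r) Hk Hk' U).
  rewrite !(nth_map 0) ?size_iota // !nth_iota // !add0n E eqxx => /esym /eqP Ekk.
  exact: val_inj.
have : #|S| * 8 <= 240 by rewrite -cardS -card_flag max_card.
have -> : n_comp e predT = #|S|.
  exact: ncomp_set.
lia.
Qed.

End Lower.

Definition labf (p : nat * nat) (be : bool) : nat :=
  look (if be then LABT else LABF) p.1 p.2.

Lemma chk5 : all (fun p => all (fun be => labf (p.2, p.1) (if lamf p then be else ~~ be) == labf p be) [:: true; false]) CL.
Proof. by vm_compute. Qed.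
Lemma chk6 : all (fun p => labf (p.1, nxt p.1 p.2) false == labf p true) CL.
Proof. by vm_compute. Qed.
Lemma chk7 : all (fun k => has (fun p => labf p true == k) CL) (iota 0 30).
Proof. by vm_compute. Qed.
Lemma chk9 : all (fun p => (p.2, p.1) \in CL) CL.
Proof. by vm_compute. Qed.

Arguments labf : simpl never.
Arguments lamf : simpl never.

Definition lab (x : flag levi_adj) : 'I_30 := inord (labf (cd x.1) x.2).

Lemma lab_a x : lab (t_vert levi_adj_sym lambda x) = lab x.
Proof.
case: x => d be; rewrite /lab /t_vert /lambda cd_rev.
have := allP chk5 _ (cd_in d).
move: (cd d) => [c1 c2] /= /andP [/eqP H1 /andP [/eqP H2 _]].
by case: be; rewrite ?H1 ?H2.
Qed.

Lemma lab_b x : lab (t_edge rho x) = lab x.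
Proof.
case: x => d []; rewrite /lab /t_edge /=.
  rewrite /rho permE cd_rho.
  have := allP chk6 _ (cd_in d).
  by move: (cd d) => [c1 c2] /= /eqP ->.
set d' := (rho^-1)%g d.
have Ed : d = rho_fun d' by rewrite -(permE rho_inj) -/rho /d' permKV.
rewrite {1}Ed cd_rho.
have := allP chk6 _ (cd_in d').
by move: (cd _) => [c1 c2] /= /eqP ->.
Qed.


Lemma faces_ge : 30 <= num_faces levi_adj_sym rho lambda.
Proof.
rewrite /num_faces.
pose e := fun x y : flag levi_adj => (y == t_vert levi_adj_sym lambda x) || (y == t_edge rho x).
change (30 <= n_comp e predT).
rewrite ncomp_set.
set S := [set r | roots e r].
have inv : forall x y, connect e x y -> lab x = lab y.
  move=> x y /connectP [p Hp ->]; elim: p x Hp => //= z p IH x /andP [Hz Hp].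
  rewrite -(IH z Hp); move: Hz; rewrite /e => /orP [/eqP ->|/eqP ->].
    by rewrite lab_a.
  by rewrite lab_b.
have : [set: 'I_30] \subset [set lab r | r in S].
  apply/subsetP => k _.
  have Hk0 : (val k : nat) \in iota 0 30 by rewrite mem_iota ltn_ord.
  have [p Hp /eqP Hk] : exists2 p, p \in CL & labf p true == val k :=
    hasP (allP chk7 _ Hk0).
  apply/imsetP; exists (fingraph.root e (decd p, true)).
    rewrite inE; apply: roots_root; apply: sym_connect_sym.
    exact: (e_symm scheme_ok_rho).
  rewrite -(inv _ _ (connect_root e (decd p, true))) /lab /= cd_decd // Hk.
  by apply: val_inj; rewrite /= inordK.
move/subset_leq_card; rewrite cardsT card_ord => H.
exact: leq_trans H (leq_imset_card _ _).
Qed.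

Fixpoint run (ms : seq bool) (p : nat * nat) : (nat * nat) * bool :=
  match ms with
  | [::] => (p, false)
  | m :: ms' => if m then run ms' (p.1, nxt p.1 p.2)
                else let r := run ms' (p.2, p.1) in (r.1, lamf p (+) r.2)
  end.

Lemma chk8 : (run MOVES P0 == (P0, true)) && (P0 \in CL).
Proof. by vm_compute. Qed.


Lemma not_orient : ~ scheme_orientable levi_adj_sym rho lambda.
Proof.
case=> col Hcol.
pose K d := col (d, true).
have Kf : forall d, col (d, false) = ~~ K d.
  by move=> d; case: (Hcol (d, true)) => _ _ H; exact: H.
have Kr : forall d, K (rho_fun d) = K d.
  move=> d; case: (Hcol (d, true)) => _ H _.
  move: H; rewrite /t_edge /= Kf /K -(permE rho_inj) -/rho.
  by move/negb_inj.
have Kv : forall d, K (dart_rev levi_adj_sym d) = lambda d (+) K d.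
  move=> d; case: (Hcol (d, true)) => H _ _.
  move: H; rewrite /t_vert /=; case: (lambda d) => /=.
    by rewrite /K => ->.
  by rewrite Kf => /negb_inj.
pose Kc p := K (decd p).
have run_ok : forall ms p, p \in CL -> ((run ms p).1 \in CL) /\ Kc (run ms p).1 = (run ms p).2 (+) Kc p.
  elim=> [|m ms IH] p Hp; first by [].
  case: m.
    have Hq : (p.1, nxt p.1 p.2) \in CL := allP chk1 _ Hp.
    have Eq : decd (p.1, nxt p.1 p.2) = rho_fun (decd p).
      by apply: cd_inj; rewrite cd_rho !cd_decd.
    have [H1 H2] := IH _ Hq.
    split; rewrite [run _ _]/=; first by [].
    by rewrite H2 /Kc Eq Kr.
  have Hq : (p.2, p.1) \in CL := allP chk9 _ Hp.
  have Eq : decd (p.2, p.1) = dart_rev levi_adj_sym (decd p).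
    by apply: cd_inj; rewrite cd_rev !cd_decd.
  have [H1 H2] := IH _ Hq.
  split; rewrite [run _ _]/=; first by [].
  rewrite H2 /Kc Eq Kv /lambda cd_decd //.
  by rewrite addbA [lamf p (+) _]addbC.
case/andP: chk8 => /eqP E HP0.
have [_ H] := run_ok MOVES P0 HP0.
move: H; rewrite E /=.
by case: (Kc P0).
Qed.

Theorem lemma3p2 : is_nonorientable_genus levi_adj_sym 6.
Proof.
split.
  exists rho, lambda; split; first exact: scheme_ok_rho.
  right; split; first exact: not_orient.
  rewrite /euler_genus card_V card_E.
  have := faces_ge; move: (num_faces _ _ _) => F HF.
  lia.
move=> c Hc [r [l [Hok H]]].
have := faces_le Hok.
case: H => [[_ Hg]|[_ Hg]]; move: Hg; rewrite /euler_genus card_V card_E;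
  move: (num_faces _ _ _) => F; lia.
Qed.
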